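(* Let $\mathbf{A}$ be a finite nilpotent algebra with a Mal'cev term, let $0\in A$, and let $\cdot$ and $\backslash$ be the loop multiplication and left division associated with $0$ (see context). Let $f(x_1,\ldots,x_m)\in\operatorname{Pol}_m(\mathbf{A})$, let $a_1,\ldots,a_N$ be an enumeration of the elements of $A$, and let $\bar b\in A^m$. Define $r_0(x_1,\ldots,x_m)=f(0,\ldots,0)$ (a constant), and recursively for $0\le k<m$: $$t_S(\bar x_{\restriction S})=\Big(\prod_{i=0}^{k} r_i(\bar x_S)\Big)\backslash f(\bar x_S)\quad\text{for } S\in\tbinom{[m]}{k+1},$$ $$r_{k+1}(x_1,\ldots,x_m)=\prod_{i=1}^{N}\ \prod_{\substack{S\in\binom{[m]}{k+1}\\ t_S(\bar b_{\restriction S})=a_i}} t_S(\bar x_{\restriction S}),$$ where the inner product is taken in an arbitrary fixed order of the sets $S$ (and $t_\emptyset:=0$). Then: (1) for every $S\subseteq[m]$, the $|S|$-ary polynomial $t_S$ is $0$-absorbing; (2) for every $S\subseteq[m]$ with $|S|=k$, $f(\bar x_S)=\prod_{i=0}^{k} r_i(\bar x_S)$ for all values of the variables; in particular $f(x_1,\ldots,x_m)=\prod_{i=0}^{m} r_i(x_1,\ldots,x_m)$ for all $x_1,\ldots,x_m\in A$; (3) if $n$ is a positive integer such that for every $k\ge n$ every $0$-absorbing $k$-ary polynomial of $\mathbf{A}$ is the constant function $0$ (which holds when $\mathbf{A}$ is supernilpotent of the appropriate degree $n$), then $r_k$ is the constant function $0$ for every $k\ge n$.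
   Context: A polynomial of an algebra $\mathbf{A}$ is a term built from variables and constants from $A$ using the basic operations of $\mathbf{A}$; $\operatorname{Pol}_m(\mathbf{A})$ denotes the $m$-ary polynomial operations. A Mal'cev term $m$ satisfies $m(y,x,x)=m(x,x,y)=y$. Nilpotency refers to the term-condition (commutator-theoretic) notion. It is a known fact that for a nilpotent algebra with Mal'cev term $m$ and any $0\in A$, $x\cdot y:=m(x,0,y)$ is a loop multiplication with neutral element $0$ (every equation $x\cdot z=y$ and $z\cdot x=y$ has a unique solution $z$), and the left division $x\backslash y$ (the unique $z$ with $x\cdot z=y$) and right division $y/x$ (the unique $z$ with $z\cdot x=y$) are polynomial operations of $\mathbf{A}$. $\prod_{i=1}^n x_i$ denotes the left-associated product $(\cdots((x_1\cdot x_2)\cdot x_3)\cdots)\cdot x_n$. $[m]=\{1,\ldots,m\}$, $\binom{[m]}{k}=\{S\subseteq[m]:|S|=k\}$. For $\bar x=(x_1,\ldots,x_m)$ and $S\subseteq[m]$, $\bar x_S$ is the $m$-tuple whose $i$-th entry is $x_i$ if $i\in S$ and $0$ otherwise, and $\bar x_{\restriction S}$ is the $|S|$-tuple $(x_i)_{i\in S}$. A polynomial $g(x_1,\ldots,x_k)$ is $0$-absorbing if $g(y_1,\ldots,y_k)=0$ whenever $y_i=0$ for some $i$. *)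

(* Defs.v *)
From HB Require Import structures.
From mathcomp Require Import all_boot.
Set Implicit Arguments. Unset Strict Implicit. Unset Printing Implicit Defensive.

Record algebra := Algebra {
  carrier :> finType;
  sym : Type;
  arity : sym -> nat;
  op : forall s : sym, ('I_(arity s) -> carrier) -> carrier }.

Section Clones.
Variable A : algebra.

Inductive Clo (n : nat) : (('I_n -> A) -> A) -> Prop :=
| clo_proj (j : 'I_n) : Clo (fun x => x j)
| clo_op (s : sym A) (g : 'I_(arity s) -> (('I_n -> A) -> A)) :
    (forall j, Clo (g j)) -> Clo (fun x => @op A s (fun j => g j x)).

Inductive Pol (n : nat) : (('I_n -> A) -> A) -> Prop :=
| pol_proj (j : 'I_n) : Pol (fun x => x j)
| pol_const (c : A) : Pol (fun _ => c)
| pol_op (s : sym A) (g : 'I_(arity s) -> (('I_n -> A) -> A)) :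
    (forall j, Pol (g j)) -> Pol (fun x => @op A s (fun j => g j x)).

Definition is_cong (th : A -> A -> Prop) : Prop :=
  [/\ (forall x, th x x), (forall x y, th x y -> th y x),
      (forall x y z, th x y -> th y z -> th x z) &
      (forall (s : sym A) (x y : 'I_(arity s) -> A),
          (forall j, th (x j) (y j)) -> th (@op A s x) (@op A s y))].

Definition catf p q (a : 'I_p -> A) (c : 'I_q -> A) : 'I_(p + q) -> A :=
  fun i => match split i with inl j => a j | inr j => c j end.

Definition centralizes (al be de : A -> A -> Prop) : Prop :=
  forall p q (t : ('I_(p + q) -> A) -> A), Clo t ->
  forall (a b : 'I_p -> A) (c d : 'I_q -> A),
    (forall i, al (a i) (b i)) -> (forall j, be (c j) (d j)) ->
    de (t (catf a c)) (t (catf a d)) -> de (t (catf b c)) (t (catf b d)).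

Definition commutator (al be : A -> A -> Prop) : A -> A -> Prop :=
  fun x y => forall de, is_cong de -> centralizes al be de -> de x y.

Definition full_rel : A -> A -> Prop := fun _ _ => True.

Fixpoint lcs (k : nat) : A -> A -> Prop :=
  match k with 0 => full_rel | k'.+1 => commutator full_rel (lcs k') end.

Definition nilpotent : Prop := exists k, forall x y, lcs k x y -> x = y.

Definition tup3 (x y z : A) : 'I_3 -> A := fun i => nth x [:: x; y; z] i.

Definition is_malcev (mt : ('I_3 -> A) -> A) : Prop :=
  [/\ Clo mt, (forall x y, mt (tup3 y x x) = y) & (forall x y, mt (tup3 x x y) = y)].

Definition lmul (mt : ('I_3 -> A) -> A) (zero : A) (x y : A) : A := mt (tup3 x zero y).

Definition zero_absorbing (zero : A) k (g : ('I_k -> A) -> A) : Prop :=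
  forall y : 'I_k -> A, (exists i, y i = zero) -> g y = zero.

Definition pair2 (x y : A) : 'I_2 -> A := fun i => nth x [:: x; y] i.
End Clones.

Section Construction.
Variables (A : finType) (zero : A) (mul ldiv : A -> A -> A) (m : nat)
  (f : ('I_m -> A) -> A) (s : seq A) (ord : seq {set 'I_m}) (b : 'I_m -> A).

Definition lprod (l : seq A) : A := if l is x :: l' then foldl mul x l' else zero.

Definition restr (S : {set 'I_m}) (x : 'I_m -> A) : 'I_m -> A :=
  fun i => if i \in S then x i else zero.

Definition tfrom (rs : seq (('I_m -> A) -> A)) (S : {set 'I_m}) (x : 'I_m -> A) : A :=
  ldiv (lprod [seq g (restr S x) | g <- rs]) (f (restr S x)).

Definition rnext (rs : seq (('I_m -> A) -> A)) (k : nat) : ('I_m -> A) -> A :=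
  fun x => lprod [seq lprod [seq tfrom rs X x |
                   X <- [seq X : {set 'I_m} <- ord | (#|X| == k.+1) && (tfrom rs X b == a)]]
                 | a : A <- s].

Fixpoint rseq (k : nat) : seq (('I_m -> A) -> A) :=
  match k with
  | 0 => [:: fun _ => f (fun _ => zero)]
  | k'.+1 => rcons (rseq k') (rnext (rseq k') k')
  end.

Definition rfun (k : nat) : ('I_m -> A) -> A := nth (fun _ => zero) (rseq k) k.

(* t_S (as an m-ary function depending only on the coordinates in S); t_empty = 0 *)
Definition tfun (S : {set 'I_m}) : ('I_m -> A) -> A :=
  if S == set0 then (fun _ => zero) else tfrom (rseq (#|S|.-1)) S.
End Construction.

(* Main.v *)
Require Import Defs.
From mathcomp Require Import all_boot.
From Stdlib Require Import FunctionalExtensionality.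
Set Implicit Arguments. Unset Strict Implicit. Unset Printing Implicit Defensive.

Section PolLemmas.
Variable A : algebra.

Lemma Clo_Pol n (g : ('I_n -> A) -> A) : Clo g -> Pol g.
Proof. elim=> [j|s g' _ IH]; [exact: pol_proj | exact: pol_op]. Qed.

Lemma Pol_comp n k (h : ('I_n -> A) -> A) (G : ('I_k -> A) -> 'I_n -> A) :
  Pol h -> (forall j, Pol (fun y => G y j)) -> Pol (fun y => h (G y)).
Proof.
move=> Ph HG; elim: Ph => [j|c|s g _ IH]; first exact: HG.
- exact: pol_const.
- exact: (@pol_op A k s (fun j y => g j (G y)) IH).
Qed.
End PolLemmas.

Section Main.
Variables (A : algebra) (mt : ('I_3 -> A) -> A) (zero : A) (ldiv : A -> A -> A) (m : nat)
  (f : ('I_m -> A) -> A) (s : seq A) (ord : seq {set 'I_m}) (b : 'I_m -> A).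
Hypotheses (Hmal : is_malcev mt) (Hdiv : forall x y, lmul mt zero x (ldiv x y) = y)
  (Hpdiv : Pol (fun v : 'I_2 -> A => ldiv (v ord0) (v ord_max))) (Hf : Pol f)
  (Hsu : uniq s) (Hs : forall a : A, a \in s) (Hou : uniq ord) (Ho : forall S, S \in ord).

Local Notation mul := (lmul mt zero).
Local Notation R := (rseq zero mul ldiv f s ord b).
Local Notation r := (rfun zero mul ldiv f s ord b).
Local Notation tf := (tfrom zero mul ldiv f).
Local Notation lp := (lprod zero mul).

Lemma mul0 y : mul zero y = y. Proof. by case: Hmal => _ _ H; exact: H. Qed.
Lemma mulr0 y : mul y zero = y. Proof. by case: Hmal => _ H _; exact: H. Qed.

Lemma divK x z : ldiv x (mul x z) = z.
Proof.
have inj : injective (ldiv x) by apply: (can_inj (g:=mul x)) => y; exact: Hdiv.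
have [g gK Kg] := injF_bij inj.
have E y : mul x y = g y by rewrite -{1}(Kg y) Hdiv.
by rewrite E Kg.
Qed.

Lemma lprod_foldl l : lp l = foldl mul zero l.
Proof. by case: l => //= x l; rewrite mul0. Qed.

Lemma foldl_one (T : eqType) (l : seq T) (F : T -> A) t0 acc : uniq l ->
  (forall t, t \in l -> t != t0 -> F t = zero) ->
  foldl mul acc [seq F t | t <- l] = if t0 \in l then mul acc (F t0) else acc.
Proof.
elim: l acc => //= t l IH acc /andP[tl ul] H.
rewrite in_cons eq_sym.
have H' : forall u, u \in l -> u != t0 -> F u = zero.
  by move=> u ul' ne'; apply: H => //; rewrite in_cons ul' orbT.
case: eqP => [E|/eqP ne].
- subst t0; rewrite (negbTE tl) /= IH //; by rewrite (negbTE tl).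
- by rewrite H ?mem_head // mulr0 /= IH.
Qed.


Lemma lprod_one (T : eqType) (l : seq T) (F : T -> A) t0 : uniq l ->
  (forall t, t \in l -> t != t0 -> F t = zero) ->
  lp [seq F t | t <- l] = if t0 \in l then F t0 else zero.
Proof.
move=> ul H; rewrite lprod_foldl (foldl_one zero ul H); by case: ifP; rewrite ?mul0.
Qed.

Lemma foldl_zeros (T : Type) (l : seq T) (F : T -> A) acc :
  (forall t, F t = zero) -> foldl mul acc [seq F t | t <- l] = acc.
Proof. move=> H; elim: l acc => //= t l IH acc; by rewrite H mulr0 IH. Qed.

Lemma iotaS k : iota 0 k.+2 = rcons (iota 0 k.+1) k.+1.
Proof. by rewrite -cats1 -(iotaD 0 k.+1 1) addn1. Qed.

Lemma R_eq k : R k = [seq r i | i <- iota 0 k.+1].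
Proof.
elim: k => [|k IH] //.
rewrite iotaS map_rcons /= IH.
congr rcons.
by rewrite /rfun /= nth_rcons IH size_map size_iota ltnn eqxx.
Qed.

Lemma size_R k : size (R k) = k.+1.
Proof. by rewrite R_eq size_map size_iota. Qed.

Lemma r_succ k : r k.+1 = rnext zero mul ldiv f s ord b (R k) k.
Proof. by rewrite /rfun /= nth_rcons size_R ltnn eqxx. Qed.

Definition P k y := lp [seq r i y | i <- iota 0 k.+1].

Lemma P_succ k y : P k.+1 y = mul (P k y) (r k.+1 y).
Proof.
rewrite /P iotaS map_rcons !lprod_foldl foldl_rcons.
by [].
Qed.

Lemma lpR k y : lp [seq g y | g <- R k] = P k y.
Proof. by rewrite R_eq -map_comp. Qed.

Lemma restr_restr (S : {set 'I_m}) (x : 'I_m -> A) : restr zero S (restr zero S x) = restr zero S x.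
Proof. apply: functional_extensionality => i; rewrite /restr; by case: (i \in S). Qed.

Lemma stepB k : (forall S : {set 'I_m}, #|S| = k -> forall x : 'I_m -> A, f (restr zero S x) = P k (restr zero S x)) ->
  forall T : {set 'I_m}, #|T| = k.+1 -> forall (x : 'I_m -> A) i, i \in T -> x i = zero -> tf (R k) T x = zero.
Proof.
move=> IH T cT x i iT xi.
have EQ : restr zero T x = restr zero (T :\ i) x.
  apply: functional_extensionality => j; rewrite /restr in_setD1.
  by case: (eqVneq j i) => [->|] /=; rewrite ?iT ?xi //; case: ifP.
have cT' : #|T :\ i| = k by move: cT; rewrite (cardsD1 i) iT => -[].
rewrite /tfrom lpR {2}EQ (IH _ cT') -EQ.
by rewrite -{2}[P k _]mulr0 divK.
Qed.

Lemma A_all k : forall S : {set 'I_m}, #|S| = k -> forall x : 'I_m -> A, f (restr zero S x) = P k (restr zero S x).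
Proof.
elim: k => [|k IH] S cS x.
  have -> : restr zero S x = fun _ => zero.
    by apply: functional_extensionality => i; rewrite /restr (cards0_eq cS) in_set0.
  by [].
have HB := stepB IH.
set y := restr zero S x.
rewrite P_succ r_succ.
have -> : rnext zero mul ldiv f s ord b (R k) k y = tf (R k) S y.
  rewrite /rnext (lprod_one (t0 := tf (R k) S b)) //; last first.
    move=> a _ ne.
    rewrite (lprod_one (t0 := S)).
    + by rewrite mem_filter (eq_sym _ a) (negbTE ne) andbF.
    + exact: filter_uniq.
    move=> X; rewrite mem_filter => /andP[/andP[/eqP cX _] _] XS.
    case: (set_0Vmem (X :\: S)) => [/eqP|[i]].
      rewrite setD_eq0 => sub; move: XS; by rewrite eqEcard sub cS cX leqnn.
    rewrite in_setD => /andP[iS iX].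
    apply: (HB X cX y i iX); by rewrite /y /restr (negbTE iS).
  rewrite Hs /= (lprod_one (t0 := S)).
  + by rewrite mem_filter cS !eqxx Ho.
  + exact: filter_uniq.
  move=> X; rewrite mem_filter => /andP[/andP[/eqP cX _] _] XS.
  case: (set_0Vmem (X :\: S)) => [/eqP|[i]].
    rewrite setD_eq0 => sub; move: XS; by rewrite eqEcard sub cS cX leqnn.
  rewrite in_setD => /andP[iS iX].
  apply: (HB X cX y i iX); by rewrite /y /restr (negbTE iS).
rewrite /tfrom lpR /y restr_restr.
by rewrite Hdiv.
Qed.


Lemma mul_pol n (g h : ('I_n -> A) -> A) : Pol g -> Pol h -> Pol (fun x => mul (g x) (h x)).
Proof.
move=> Pg Ph; case: Hmal => Cm _ _.
apply: (Pol_comp (G := fun x => tup3 (g x) zero (h x)) (Clo_Pol Cm)).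
by case=> [[|[|[|j]]] Hj] //=; exact: pol_const.
Qed.

Lemma div_pol n (g h : ('I_n -> A) -> A) : Pol g -> Pol h -> Pol (fun x => ldiv (g x) (h x)).
Proof.
move=> Pg Ph.
apply: (Pol_comp (G := fun x => pair2 (g x) (h x)) Hpdiv).
by case=> [[|[|j]] Hj].
Qed.

Lemma foldl_pol n (T : eqType) (l : seq T) (F : T -> ('I_n -> A) -> A) (g : ('I_n -> A) -> A) :
  (forall t, t \in l -> Pol (F t)) -> Pol g -> Pol (fun x => foldl mul (g x) [seq F t x | t <- l]).
Proof.
elim: l g => //= t l IH g HF Pg; apply: IH.
  by move=> u ul; apply: HF; rewrite in_cons ul orbT.
apply: mul_pol => //; apply: HF; exact: mem_head.
Qed.

Lemma lprod_pol n (T : eqType) (l : seq T) (F : T -> ('I_n -> A) -> A) :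
  (forall t, t \in l -> Pol (F t)) -> Pol (fun x => lp [seq F t x | t <- l]).
Proof.
case: l => [|t l] HF /=; first exact: pol_const.
apply: foldl_pol; first by move=> u ul; apply: HF; rewrite in_cons ul orbT.
apply: HF; exact: mem_head.
Qed.

Lemma restr_pol (S : {set 'I_m}) (h : ('I_m -> A) -> A) : Pol h -> Pol (fun x => h (restr zero S x)).
Proof.
move=> Ph; apply: (Pol_comp (G := fun x => restr zero S x) Ph) => i.
rewrite /restr; case: (i \in S); [exact: pol_proj | exact: pol_const].
Qed.

Lemma tf_eq k (S : {set 'I_m}) : tf (R k) S = fun x => ldiv (P k (restr zero S x)) (f (restr zero S x)).
Proof. apply: functional_extensionality => x; by rewrite /tfrom lpR. Qed.

Lemma r_pol_le k : forall i, i <= k -> Pol (r i).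
Proof.
elim: k => [|k IH] [|i] //= Hi; try exact: pol_const.
have {}IH : forall j, j <= i -> Pol (r j) by move=> j Hj; apply: IH; apply: leq_trans Hj Hi.
have PP : Pol (P i).
  apply: lprod_pol => j; rewrite mem_iota add0n ltnS => Hj; exact: IH.
rewrite r_succ /rnext; apply: lprod_pol => a _; apply: lprod_pol => X _.
rewrite tf_eq; apply: div_pol; exact: restr_pol.
Qed.

Lemma r_pol i : Pol (r i).
Proof. exact: (r_pol_le (leqnn i)). Qed.

Lemma P_pol k : Pol (P k).
Proof. apply: lprod_pol => j _; exact: r_pol. Qed.


Lemma t_zero k (X : {set 'I_m}) (HX : #|X| = k.+1)
 (HB : forall (x : 'I_m -> A) i, i \in X -> x i = zero -> tf (R k) X x = zero)
 (Hpol : forall g : ('I_#|X| -> A) -> A, Pol g -> zero_absorbing zero g -> forall y, g y = zero)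
 (x : 'I_m -> A) : tf (R k) X x = zero.
Proof.
pose ext (y : 'I_#|X| -> A) (i : 'I_m) : A :=
  if i \in X then (if (insub (index i (enum X)) : option 'I_#|X|) is Some j then y j else zero) else zero.
have Pg : Pol (fun y => tf (R k) X (ext y)).
  apply: (Pol_comp (G := ext)).
    rewrite tf_eq; apply: div_pol; apply: restr_pol => //; exact: P_pol.
  move=> i; rewrite /ext; case: (i \in X); last exact: pol_const.
  case: (insub _) => [j|]; [exact: pol_proj | exact: pol_const].
have Za : zero_absorbing zero (fun y => tf (R k) X (ext y)).
  move=> y [j yj] /=; apply: (HB (ext y) (enum_val j)); first exact: enum_valP.
  have jlt : nat_of_ord j < size (enum X) by case: j yj => j Hj _ /=; move: Hj; rewrite cardE.
  rewrite /ext enum_valP /enum_val (index_uniq _ jlt (enum_uniq _)).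
  have E2 : @insub nat (fun x0 => x0 < #|X|) _ (nat_of_ord j) = Some j := valK j.
  by rewrite E2.
pose y := fun j : 'I_#|X| => x (enum_val j).
have E : restr zero X x = restr zero X (ext y).
  apply: functional_extensionality => i; rewrite /restr /ext; case: ifP => // iX.
  case: insubP => [j _ ej | ]; last by rewrite cardE index_mem mem_enum iX.
  by rewrite /y /enum_val ej nth_index ?mem_enum.
rewrite /tfrom E.
exact: (Hpol _ Pg Za y).
Qed.

Lemma main_sec :
  [/\ (forall (S : {set 'I_m}) (x : 'I_m -> A),
          (exists2 i, i \in S & x i = zero) -> tfun zero mul ldiv f s ord b S x = zero),
      (forall (S : {set 'I_m}) (x : 'I_m -> A),
          f (restr zero S x) = lprod zero mul [seq r i (restr zero S x) | i <- iota 0 #|S|.+1]),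
      (forall x : 'I_m -> A, f x = lprod zero mul [seq r i x | i <- iota 0 m.+1]) &
      (forall n : nat, 0 < n ->
         (forall k, n <= k -> forall g : ('I_k -> A) -> A,
             Pol g -> zero_absorbing zero g -> forall y, g y = zero) ->
         forall k, n <= k <= m -> forall x, r k x = zero)].
Proof.
have HB k : forall T : {set 'I_m}, #|T| = k.+1 -> forall (x : 'I_m -> A) i,
    i \in T -> x i = zero -> tf (R k) T x = zero.
  by apply: stepB => S cS x; apply: A_all.
split.
- move=> S x [i iS xi]; rewrite /tfun; case: eqP => [//|/eqP ne].
  have cS : #|S| = (#|S|.-1).+1 by rewrite prednK // card_gt0.
  exact: (HB _ S cS x i iS xi).
- move=> S x; exact: (A_all (erefl _)).
- move=> x.
  have := A_all (cardsT 'I_m) x; rewrite card_ord.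
  have -> : restr zero [set: 'I_m] x = x.
    by apply: functional_extensionality => i; rewrite /restr inE.
  by [].
- move=> n n0 Hn [|k] /andP[nk km] x; first by move: (leq_trans n0 nk).
  rewrite r_succ /rnext lprod_foldl foldl_zeros // => a.
  rewrite lprod_foldl.
  have := @foldl_one _ [seq X : {set 'I_m} <- ord | (#|X| == k.+1) && (tf (R k) X b == a)]
     (fun X : {set 'I_m} => tf (R k) X x) set0 zero (filter_uniq _ Hou).
  rewrite /= => ->.
    by case: ifP => //; rewrite mem_filter cards0.
  move=> X; rewrite mem_filter => /andP[/andP[/eqP cX _] _] _.
  apply: (t_zero cX (HB _ X cX)).
  by apply: Hn; rewrite cX.
Qed.

End Main.

Theorem mainTheorem1 (A : algebra) (mt : ('I_3 -> A) -> A) (zero : A)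
  (ldiv : A -> A -> A) (m : nat) (f : ('I_m -> A) -> A)
  (s : seq A) (ord : seq {set 'I_m}) (b : 'I_m -> A) :
  nilpotent A -> is_malcev mt ->
  (* \ is the left division of the loop (x, y) |-> m(x, 0, y); it is a polynomial *)
  (forall x y, lmul mt zero x (ldiv x y) = y) ->
  Pol (fun v : 'I_2 -> A => ldiv (v ord0) (v ord_max)) ->
  Pol f ->
  (* s = a_1, ..., a_N enumerates A *)
  uniq s -> (forall a : A, a \in s) ->
  (* ord : a fixed order of the subsets of [m] *)
  uniq ord -> (forall S, S \in ord) ->
  let mul := lmul mt zero in
  let r := rfun zero mul ldiv f s ord b in
  let t := tfun zero mul ldiv f s ord b in
  [/\ (* (1) *)
      (forall (S : {set 'I_m}) (x : 'I_m -> A),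
          (exists2 i, i \in S & x i = zero) -> t S x = zero),
      (* (2) *)
      (forall (S : {set 'I_m}) (x : 'I_m -> A),
          f (restr zero S x) = lprod zero mul [seq r i (restr zero S x) | i <- iota 0 #|S|.+1]),
      (forall x : 'I_m -> A, f x = lprod zero mul [seq r i x | i <- iota 0 m.+1]) &
      (* (3) *)
      (forall n : nat, 0 < n ->
         (forall k, n <= k -> forall g : ('I_k -> A) -> A,
             Pol g -> zero_absorbing zero g -> forall y, g y = zero) ->
         forall k, n <= k <= m -> forall x, r k x = zero)].
Proof.
move=> _ Hmal Hdiv Hpdiv Hf Hsu Hs Hou Ho mul r t.
exact: main_sec.
Qed.
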